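(* Let $X$ be a metric space, let $A\subseteq X$ be nonempty and let $Y$ be a hyperconvex metric space. Then for every $f\in\mathcal{N}(A,Y)$, the set $\Phi_c(f)$ of all $f'\in\mathcal{N}(X,Y)$ with $f'|_A=f$ and $f'(X)\subseteq\mathrm{cov}(f(A))$ is externally hyperconvex in $(\mathcal{N}(X,Y),d_\infty)$.
   Context: A metric space $Y$ is hyperconvex if $\bigcap_\alpha B(x_\alpha,r_\alpha)\ne\emptyset$ for every family of points $x_\alpha$ and $r_\alpha>0$ with $d(x_\alpha,x_\beta)\le r_\alpha+r_\beta$ ($B$ = closed ball). A subset $E$ of a metric space $Z$ is externally hyperconvex if for any family $\{x_\alpha\}\subseteq Z$ and reals $\{r_\alpha\}$ with $d(x_\alpha,x_\beta)\le r_\alpha+r_\beta$ and $\mathrm{dist}(x_\alpha,E)\le r_\alpha$, one has $\bigcap_\alpha B(x_\alpha,r_\alpha)\cap E\ne\emptyset$. For nonempty bounded $D\subseteq Y$, $\mathrm{cov}(D)$ is the intersection of all closed balls containing $D$. $\mathcal{N}(X,Y)$ is the set of bounded nonexpansive maps with supremum metric $d_\infty$. *)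

(* Defs.v *)
From mathcomp Require Import all_boot all_order all_algebra.
From mathcomp Require Import all_classical all_reals.
Set Implicit Arguments. Unset Strict Implicit. Unset Printing Implicit Defensive.
Import Order.TTheory GRing.Theory Num.Theory.
Local Open Scope classical_set_scope.
Local Open Scope ring_scope.

Section MetricDefs.
Variable R : realType.

Definition is_metric (T : Type) (d : T -> T -> R) : Prop :=
  (forall x y, 0 <= d x y) /\
  (forall x y, d x y = 0 <-> x = y) /\
  (forall x y, d x y = d y x) /\
  (forall x y z, d x z <= d x y + d y z).

Definition cball (T : Type) (d : T -> T -> R) (c : T) (r : R) : set T :=
  [set y | d c y <= r].

Definition hyperconvex (T : Type) (d : T -> T -> R) : Prop :=
  forall (I : Type) (x : I -> T) (r : I -> R),
    (forall i, 0 < r i) ->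
    (forall i j, d (x i) (x j) <= r i + r j) ->
    exists y : T, forall i, cball d (x i) (r i) y.

Definition dist_set (T : Type) (d : T -> T -> R) (z : T) (E : set T) : R :=
  inf [set d z e | e in E].

Definition ext_hyperconvex (T : Type) (d : T -> T -> R) (E : set T) : Prop :=
  forall (I : Type) (x : I -> T) (r : I -> R),
    (forall i j, d (x i) (x j) <= r i + r j) ->
    (forall i, dist_set d (x i) E <= r i) ->
    exists2 y : T, E y & forall i, cball d (x i) (r i) y.

Definition cov (T : Type) (d : T -> T -> R) (D : set T) : set T :=
  [set y | forall (c : T) (r : R), D `<=` cball d c r -> cball d c r y].

Definition nonexpansive (T U : Type) (dT : T -> T -> R) (dU : U -> U -> R)
  (f : T -> U) : Prop := forall x y, dU (f x) (f y) <= dT x y.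

Definition bounded_map (T U : Type) (dU : U -> U -> R) (f : T -> U) : Prop :=
  exists M : R, forall x y, dU (f x) (f y) <= M.

Definition Nmap (T U : Type) (dT : T -> T -> R) (dU : U -> U -> R) : Type :=
  {f : T -> U | nonexpansive dT dU f /\ bounded_map dU f}.

Definition dsup (T U : Type) (dT : T -> T -> R) (dU : U -> U -> R)
  (f g : Nmap dT dU) : R :=
  sup [set dU (proj1_sig f x) (proj1_sig g x) | x in [set: T]].

Definition sub_dist {X : Type} (dX : X -> X -> R) (A : set X)
  (a b : {x : X | A x}) : R := dX (proj1_sig a) (proj1_sig b).

Definition Phi_c (X Y : Type) (dX : X -> X -> R) (dY : Y -> Y -> R) (A : set X)
  (f : Nmap (@sub_dist X dX A) dY) : set (Nmap dX dY) :=
  [set g | (forall a : {x : X | A x}, proj1_sig g (proj1_sig a) = proj1_sig f a) /\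
           range (proj1_sig g) `<=` cov dY (range (proj1_sig f))].

End MetricDefs.

(* Main.v *)
Require Import Defs.
From mathcomp Require Import all_boot all_order all_algebra.
From mathcomp Require Import all_classical all_reals.
From mathcomp Require Import lra.
Local Open Scope classical_set_scope.
Local Open Scope ring_scope.
Set Implicit Arguments. Unset Strict Implicit. Unset Printing Implicit Defensive.
Import Order.TTheory GRing.Theory Num.Theory.

Section Aux.
Variables (R : realType) (X Y : Type) (dX : X -> X -> R) (dY : Y -> Y -> R).
Hypotheses (hX : is_metric dX) (hY : is_metric dY).

Let dY0 x y : 0 <= dY x y := proj1 hY x y.
Let dYxx x : dY x x = 0 := (proj2 (proj1 (proj2 hY) x x)) erefl.
Let dYs x y : dY x y = dY y x := proj1 (proj2 (proj2 hY)) x y.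
Let dYt x y z : dY x z <= dY x y + dY y z := proj2 (proj2 (proj2 hY)) x y z.
Let dX0 x y : 0 <= dX x y := proj1 hX x y.
Let dXxx x : dX x x = 0 := (proj2 (proj1 (proj2 hX) x x)) erefl.
Let dXs x y : dX x y = dX y x := proj1 (proj2 (proj2 hX)) x y.
Let dXt x y z : dX x z <= dX x y + dX y z := proj2 (proj2 (proj2 hX)) x y z.

Lemma hyper0 (hYh : hyperconvex dY) (I : Type) (x : I -> Y) (r : I -> R) :
  (forall i, 0 <= r i) -> (forall i j, dY (x i) (x j) <= r i + r j) ->
  exists y, forall i, dY (x i) y <= r i.
Proof.
move=> r0 hxy.
case: (pselect (exists k, r k = 0)) => [[k rk0]|nk].
  by exists (x k) => i; have := hxy i k; rewrite rk0 addr0.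
have rpos : forall i, 0 < r i.
  by move=> i; rewrite lt_neqAle r0 andbT; apply/eqP=> h; apply: nk; exists i.
by have [y hy] := hYh I x r rpos hxy; exists y.
Qed.


Section Ext.
Hypothesis hYh : hyperconvex dY.
Variables (A : set X) (fA : {x | A x} -> Y).
Hypothesis fAne : forall a b, dY (fA a) (fA b) <= dX (proj1_sig a) (proj1_sig b).
Variables (K : Type) (c : K -> X -> Y) (rho : K -> X -> R).
Hypotheses (H1 : forall k k' x, dY (c k x) (c k' x) <= rho k x + rho k' x)
 (H2 : forall z x w, (forall k, dY (c k z) w <= rho k z) ->
        forall k, dY w (c k x) <= dX z x + rho k x)
 (H3 : forall a k, dY (c k (proj1_sig a)) (fA a) <= rho k (proj1_sig a)).

Definition Adm (p : X -> option Y) :=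
  [/\ (forall a, p (proj1_sig a) = Some (fA a)),
      (forall x y, p x = Some y -> forall k, dY (c k x) y <= rho k x) &
      (forall x x' y y', p x = Some y -> p x' = Some y' -> dY y y' <= dX x x')].

Definition p0 (x : X) : option Y :=
  match pselect (A x) with left h => Some (fA (exist _ x h)) | right _ => None end.

Lemma p0_A a : p0 (proj1_sig a) = Some (fA a).
Proof.
case: a => x ax /=; rewrite /p0; case: pselect => [h|//].
by congr (Some (fA _)); congr exist; exact: Prop_irrelevance.
Qed.

Lemma p0_some x y : p0 x = Some y -> exists a, proj1_sig a = x /\ fA a = y.
Proof.
rewrite /p0; case: pselect => [h [<-]|//]; by exists (exist _ x h).
Qed.

Lemma Adm_p0 : Adm p0.
Proof.
split; first exact: p0_A.
- by move=> x y /p0_some [a [<- <-]] k; exact: H3.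
- by move=> x x' y y' /p0_some [a [<- <-]] /p0_some [b [<- <-]]; exact: fAne.
Qed.

Lemma p0_le p : Adm p -> forall x y, p0 x = Some y -> p x = Some y.
Proof. by case=> hA _ _ x y /p0_some [a [<- <-]]; exact: hA. Qed.

Definition T := {p | Adm p}.
Definition Rl (s t : T) : bool :=
  `[< forall x y, proj1_sig s x = Some y -> proj1_sig t x = Some y >].

Lemma extend : exists g : X -> Y, (forall x x', dY (g x) (g x') <= dX x x') /\
  (forall a, g (proj1_sig a) = fA a) /\ (forall x k, dY (c k x) (g x) <= rho k x).
Proof.
pose p0T : T := exist _ p0 Adm_p0.
have Rrefl : forall t, Rl t t by move=> t; apply/asboolP.
have Rtr : forall r s t, Rl r s -> Rl s t -> Rl r t.
  by move=> r s t /asboolP h1 /asboolP h2; apply/asboolP => x y /h1 /h2.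
have Ranti : forall s t, Rl s t -> Rl t s -> s = t.
  move=> [s hs] [t ht] /asboolP /= h1 /asboolP /= h2.
  have st : s = t.
    apply: funext => x; case E: (s x) => [y|]; first by rewrite (h1 _ _ E).
    by case E': (t x) => [y|//]; rewrite (h2 _ _ E') in E.
  by subst t; congr exist; exact: Prop_irrelevance.
have Rp0 : forall t, Rl p0T t by move=> [t ht]; apply/asboolP => /=; exact: p0_le.
have ub : forall C : set T, total_on C Rl -> exists t, forall s, C s -> Rl s t.
  move=> C Ctot.
  pose C' := C `|` [set p0T].
  have C'tot : total_on C' Rl.
    move=> s t [Cs|->] [Ct|->]; [exact: Ctot| by right | by left | by left].
  pose Q x y := exists s, C' s /\ proj1_sig s x = Some y.
  have Quniq : forall x y y', Q x y -> Q x y' -> y = y'.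
    move=> x y y' [s [Cs hs]] [t [Ct ht]].
    case: (C'tot s t Cs Ct) => /asboolP h.
      by move: (h _ _ hs); rewrite ht => -[].
    by move: (h _ _ ht); rewrite hs => -[].
  pose u x := match pselect (exists y, Q x y) with
              left h => Some (projT1 (cid h)) | right _ => None end.
  have uQ : forall x y, u x = Some y <-> Q x y.
    move=> x y; rewrite /u; case: pselect => [h|h]; last first.
      by split=> // hq; exfalso; apply: h; exists y.
    case: (cid h) => y0 hy0 /=; split; first by case=> <-.
    by move=> hq; rewrite (Quniq _ _ _ hy0 hq).
  have Qs : forall x y, Q x y -> exists s : T, C' s /\ proj1_sig s x = Some y.
    by [].
  have uAdm : Adm u.
    split.
    - by move=> a; apply/uQ; exists p0T; split; [right| exact: p0_A].
    - move=> x y /uQ [[s [ad1 ad2 ad3]] [_ /= hs]]; exact: ad2.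
    - move=> x x' y y' /uQ [s [Cs hs]] /uQ [t [Ct ht]].
      case: (C'tot s t Cs Ct) => /asboolP h.
        by case: (proj2_sig t) => _ _ ad; apply: ad (h _ _ hs) ht.
      by case: (proj2_sig s) => _ _ ad; apply: ad hs (h _ _ ht).
  exists (exist _ u uAdm) => s Cs; apply/asboolP => x y hs /=.
  by apply/uQ; exists s; split; [left|].
have [m mmax] := Zorn Rrefl Rtr Ranti ub.
case: m mmax => m hm mmax.
have [mA mk mne] := hm.
have tot : forall x, exists y, m x = Some y.
  move=> x; case E: (m x) => [y|]; first by exists y.
  exfalso.
  pose J := ({zw : X * Y | m zw.1 = Some zw.2} + K)%type.
  pose cen (j : J) : Y := match j with inl zw => (proj1_sig zw).2 | inr k => c k x end.
  pose rad (j : J) : R := match j with inl zw => dX (proj1_sig zw).1 x | inr k => rho k x end.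
  have [y hy] : exists y, forall j, dY (cen j) y <= rad j.
    apply: hyper0 => //.
      case=> [zw|k] /=; first exact: dX0.
      by have := H1 k k x; rewrite dYxx; lra.
    case=> [[[z w] /= hzw]|k] [[[z' w'] /= hzw']|k'] /=.
    - apply: le_trans (mne _ _ _ _ hzw hzw') _.
      by rewrite (dXs z' x); exact: dXt.
    - by apply: H2; exact: mk hzw.
    - by rewrite dYs addrC; apply: H2; exact: mk hzw'.
    - exact: H1.
  pose m' t := match pselect (t = x) with left _ => Some y | right _ => m t end.
  have m'x : m' x = Some y by rewrite /m'; case: pselect.
  have m'n : forall t, t <> x -> m' t = m t by move=> t tx; rewrite /m'; case: pselect.
  have Adm' : Adm m'.
    split.
    - move=> a; rewrite m'n ?mA //; move=> ax; by rewrite -ax mA in E.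
    - move=> t y'; case: (pselect (t = x)) => [->|tx].
        by rewrite m'x => -[<-] k; exact: (hy (inr k)).
      by rewrite m'n //; exact: mk.
    - move=> t t' y1 y2.
      case: (pselect (t = x)) => [->|tx]; case: (pselect (t' = x)) => [->|tx'].
      + by rewrite m'x => -[<-] [<-]; rewrite dYxx dXxx.
      + rewrite m'x m'n // => -[<-] h2.
        by rewrite dYs dXs; exact: (hy (inl (exist _ (t', y2) h2))).
      + rewrite m'x m'n // => h1 [<-].
        exact: (hy (inl (exist _ (t, y1) h1))).
      + by rewrite !m'n //; exact: mne.
  have := mmax (exist _ m' Adm').
  have le : Rl (exist _ m hm) (exist _ m' Adm').
    apply/asboolP => t y' /= ht; rewrite m'n // => tx; by rewrite tx E in ht.
  move=> /(_ le) /(f_equal (@proj1_sig _ _)) /= /(f_equal (fun f => f x)).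
  by rewrite m'x E.
pose g x := projT1 (cid (tot x)).
have gm : forall x, m x = Some (g x) by move=> x; rewrite /g; case: cid.
exists g; split; first by move=> x x'; apply: mne; exact: gm.
split; first by move=> a; move: (gm (proj1_sig a)); rewrite mA => -[].
by move=> x k; apply: mk; exact: gm.
Qed.

End Ext.
End Aux.

Section Dsup.
Variables (R : realType) (X Y : Type) (dX : X -> X -> R) (dY : Y -> Y -> R).
Hypotheses (hY : is_metric dY).
Let dYt x y z : dY x z <= dY x y + dY y z := proj2 (proj2 (proj2 hY)) x y z.

Lemma dsup_ge (g h : Nmap dX dY) x :
  dY (proj1_sig g x) (proj1_sig h x) <= dsup g h.
Proof.
case: g => g [gne [Mg hMg]]; case: h => h [hne [Mh hMh]]; rewrite /dsup /=.
have hs : has_sup [set dY (g x0) (h x0) | x0 in [set: X]].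
  split; first by exists (dY (g x) (h x)); exists x.
  exists (Mg + dY (g x) (h x) + Mh) => _ [t _ <-].
  have := dYt (g t) (g x) (h t); have := dYt (g x) (h x) (h t).
  have := hMg t x; have := hMh x t; lra.
by apply: (sup_upper_bound hs); exists x.
Qed.

Lemma dsup_le (g h : Nmap dX dY) (r : R) (x0 : X) :
  (forall x, dY (proj1_sig g x) (proj1_sig h x) <= r) -> dsup g h <= r.
Proof.
move=> H; apply: ge_sup; first by exists (dY (proj1_sig g x0) (proj1_sig h x0)); exists x0.
by move=> _ [t _ <-].
Qed.
End Dsup.

Theorem lemma5p12 (R : realType) (X Y : Type)
  (dX : X -> X -> R) (dY : Y -> Y -> R)
  (hX : is_metric dX) (hY : is_metric dY)
  (A : set X) (hA : A !=set0)
  (hYh : hyperconvex dY)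
  (f : Nmap (@sub_dist R X dX A) dY) :
  ext_hyperconvex (@dsup R X Y dX dY) (Phi_c f).
Proof.
have dY0 x y : 0 <= dY x y := proj1 hY x y.
have dYs x y : dY x y = dY y x := proj1 (proj2 (proj2 hY)) x y.
have dYt x y z : dY x z <= dY x y + dY y z := proj2 (proj2 (proj2 hY)) x y z.
have dX0 x y : 0 <= dX x y := proj1 hX x y.
move=> I F r Hij Hd.
set fA := proj1_sig f.
have fAne : forall a b, dY (fA a) (fA b) <= dX (proj1_sig a) (proj1_sig b)
  := proj1 (proj2_sig f).
have [M hM] := proj2 (proj2_sig f).
have [x0 Ax0] := hA.
pose a0 : {x | A x} := exist _ x0 Ax0.
pose CB := {cr : Y * R | range fA `<=` cball dY cr.1 cr.2}.
have cbA : forall (k : CB) a, dY (proj1_sig k).1 (fA a) <= (proj1_sig k).2.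
  by move=> [[c0 r0] h] a /=; apply: h; exists a.
have cbcb : forall k k' : CB,
    dY (proj1_sig k).1 (proj1_sig k').1 <= (proj1_sig k).2 + (proj1_sig k').2.
  move=> k k'; have := cbA k a0; have := cbA k' a0.
  have := dYt (proj1_sig k).1 (fA a0) (proj1_sig k').1.
  have := dYs (fA a0) (proj1_sig k').1; lra.
have mkN : forall g : X -> Y, (forall x x', dY (g x) (g x') <= dX x x') ->
    (forall x (k : CB), dY (proj1_sig k).1 (g x) <= (proj1_sig k).2) ->
    {gN : Nmap dX dY | proj1_sig gN = g}.
  move=> g gne gk.
  have ball : range fA `<=` cball dY (fA a0, M).1 (fA a0, M).2.
    by move=> _ [a _ <-]; exact: hM.
  pose k0 : CB := exist _ (fA a0, M) ball.
  have bnd : bounded_map dY g.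
    exists (M + M) => x x'; have := gk x k0; have := gk x' k0.
    have := dYt (g x) (fA a0) (g x'); have := dYs (g x) (fA a0) => /=; lra.
  by exists (exist _ g (conj gne bnd)).
have inPhi : forall gN : Nmap dX dY,
    (forall a, proj1_sig gN (proj1_sig a) = fA a) ->
    (forall x (k : CB), dY (proj1_sig k).1 (proj1_sig gN x) <= (proj1_sig k).2) ->
    Phi_c f gN.
  move=> gN h1 h2; split; first exact: h1.
  by move=> _ [x _ <-] c0 r0 hc; exact: (h2 x (exist _ (c0, r0) hc)).
have [h0 Ph0] : exists h0, Phi_c f h0.
  have H2 : forall z x w, (forall k : CB, dY (proj1_sig k).1 w <= (proj1_sig k).2) ->
      forall k : CB, dY w (proj1_sig k).1 <= dX z x + (proj1_sig k).2.
    by move=> z x w hw k; have := hw k; have := dX0 z x; have := dYs w (proj1_sig k).1; lra.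
  have [g [gne [gA gk]]] := @extend R X Y dX dY hX hY hYh A fA fAne CB
     (fun k _ => (proj1_sig k).1) (fun k _ => (proj1_sig k).2)
     (fun k k' _ => cbcb k k') H2 (fun a k => cbA k a).
  have [gN gNE] := mkN g gne gk.
  by exists gN; apply: inPhi; rewrite gNE.
have close : forall i eps, 0 < eps -> exists h, Phi_c f h /\
    forall x, dY (proj1_sig (F i) x) (proj1_sig h x) <= r i + eps.
  move=> i eps e0.
  have : inf [set dsup (F i) h | h in Phi_c f] < r i + eps.
    by have := Hd i; rewrite /dist_set; lra.
  move=> /inf_lt [].
    by exists (dsup (F i) h0); exists h0.
  move=> _ [h Ph <-] lt; exists h; split => // x.
  exact: le_trans (dsup_ge hY _ _ x) (ltW lt).
have F1 : forall i x (k : CB),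
    dY (proj1_sig k).1 (proj1_sig (F i) x) <= (proj1_sig k).2 + r i.
  move=> i x k; apply/ler_addgt0Pr => e e0.
  have [h [Ph hh]] := close i e e0.
  have hk : dY (proj1_sig k).1 (proj1_sig h x) <= (proj1_sig k).2.
    apply: (proj2 Ph); first by exists x.
    exact: (proj2_sig k).
  have := hh x; have := dYt (proj1_sig k).1 (proj1_sig h x) (proj1_sig (F i) x).
  have := dYs (proj1_sig h x) (proj1_sig (F i) x); lra.
have F2 : forall i a, dY (proj1_sig (F i) (proj1_sig a)) (fA a) <= r i.
  move=> i a; apply/ler_addgt0Pr => e e0.
  have [h [Ph hh]] := close i e e0.
  by have := hh (proj1_sig a); rewrite (proj1 Ph a).
pose K := (I + CB)%type.
pose c (k : K) x := match k with inl i => proj1_sig (F i) x | inr k => (proj1_sig k).1 end.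
pose rho (k : K) (x : X) := match k with inl i => r i | inr k => (proj1_sig k).2 end.
have H1 : forall k k' x, dY (c k x) (c k' x) <= rho k x + rho k' x.
  case=> [i|k] [j|k'] x /=.
  - exact: le_trans (dsup_ge hY _ _ x) (Hij i j).
  - by rewrite dYs addrC; exact: F1.
  - exact: F1.
  - exact: cbcb.
have H2 : forall z x w, (forall k, dY (c k z) w <= rho k z) ->
        forall k, dY w (c k x) <= dX z x + rho k x.
  move=> z x w hw [i|k] /=.
  - have := hw (inl i); have := dYt w (proj1_sig (F i) z) (proj1_sig (F i) x).
    have := proj1 (proj2_sig (F i)) z x; have := dYs w (proj1_sig (F i) z) => /=.
    lra.
  - have := hw (inr k); have := dX0 z x; have := dYs w (proj1_sig k).1 => /=; lra.
have H3 : forall a k, dY (c k (proj1_sig a)) (fA a) <= rho k (proj1_sig a).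
  by move=> a [i|k] /=; [exact: F2 | exact: cbA].
have [g [gne [gA gk]]] := @extend R X Y dX dY hX hY hYh A fA fAne K c rho H1 H2 H3.
have [gN gNE] := mkN g gne (fun x k => gk x (inr k)).
exists gN.
  by apply: inPhi; rewrite gNE //; move=> x k; exact: (gk x (inr k)).
move=> i; rewrite /cball /=; apply: (@dsup_le _ _ _ _ _ (F i) gN (r i) x0) => x; rewrite gNE; exact: (gk x (inl i)).
Qed.
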